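(* Fix $n\ge 3$, and let $a_0,\dots,a_{n-1}$ be regular closed subsets of $\mathbb{R}^2$ such that for all $0\le i<n$, $a_i\neq\emptyset$ and $\mathrm{int}(a_i\cup a_{[i+1]})$ is connected, and $a_i\cdot a_j=\emptyset$ for all $0\le i<j<n$. Then there exist Jordan arcs $\alpha_0,\dots,\alpha_{n-1}$ and points $p_0,\dots,p_{n-1}$ such that: for all $0\le i<n$, $\alpha_i$ is a Jordan arc from $p_i$ to $p_{[i+1]}$ with $\alpha_i\subseteq\mathrm{int}(a_i\cup a_{[i+1]})$; the concatenation $\alpha_0\cdots\alpha_{n-1}$ is a Jordan curve lying in $\mathrm{int}(a_0\cup\dots\cup a_{n-1})$; and $p_i\in\mathrm{int}(a_i)$ for all $0\le i<n$.
   Context: $[k]$ denotes $k\bmod n$. $a\cdot b$ denotes $\overline{\mathrm{int}(a\cap b)}$ (the product of regular closed sets). A Jordan arc is a continuous injective map from $[0,1]$ to $\mathbb{R}^2$ (or a constant map, a degenerate arc), identified with its image; a Jordan curve is a continuous injective map from the circle to $\mathbb{R}^2$. The concatenation $\alpha_0\cdots\alpha_{n-1}$ being a Jordan curve means each $\alpha_i$ ends where $\alpha_{[i+1]}$ begins and the union of the arcs, traversed in order, is a Jordan curve. *)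

(* Defs.v *)
From HB Require Import structures.
From mathcomp Require Import all_boot all_order all_algebra.
From mathcomp Require Import all_classical all_reals all_analysis.
From mathcomp Require Import Rstruct Rstruct_topology.
Set Implicit Arguments. Unset Strict Implicit. Unset Printing Implicit Defensive.
Import Order.TTheory GRing.Theory Num.Theory.
Local Open Scope classical_set_scope.
Local Open Scope ring_scope.

Definition plane := (Rdefinitions.R * Rdefinitions.R)%type.

Definition regular_closed (A : set plane) : Prop := closure (interior A) = A.

(* Product of regular closed sets: a . b = cl(int(a /\ b)). *)
Definition rc_prod (A B : set plane) : set plane := closure (interior (A `&` B)).

(* A Jordan arc: a map [0,1] -> R^2 (given as a function R -> R^2, only its
   restriction to [0,1] matters) that is continuous and injective on [0,1],
   or constant on [0,1] (degenerate arc). *)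
Definition jordan_arc (f : Rdefinitions.R -> plane) : Prop :=
  {within `[0, 1], continuous f} /\
  ({in `[0, 1] &, injective f} \/ (forall t, t \in `[0, 1] -> f t = f 0)).

(* Image of an arc (arcs are identified with their images). *)
Definition arc_img (f : Rdefinitions.R -> plane) : set plane := f @` `[0, 1].

(* A Jordan curve, parametrized by [0,1] with 0 and 1 identified
   (i.e. a continuous injective map from the circle R/Z). *)
Definition jordan_curve (g : Rdefinitions.R -> plane) : Prop :=
  {within `[0, 1], continuous g} /\ g 0 = g 1 /\ {in `[0, 1[ &, injective g}.

(* The concatenation alpha_0 ... alpha_{n-1} is a Jordan curve: each arc ends
   where the next one begins, and there is a Jordan curve g together with a
   subdivision 0 = t_0 <= t_1 <= ... <= t_n = 1 such that g traverses
   alpha_i on [t_i, t_{i+1}] (same image, from its start to its end). *)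
Definition concat_jordan_curve (n : nat) (alpha : nat -> Rdefinitions.R -> plane)
    (C : set plane) : Prop :=
  (forall i, (i < n)%N -> alpha i 1 = alpha ((i.+1) %% n)%N 0) /\
  exists (g : Rdefinitions.R -> plane) (t : nat -> Rdefinitions.R),
    [/\ jordan_curve g, t 0%N = 0, t n = 1,
        C = g @` `[0, 1] &
        forall i, (i < n)%N ->
          [/\ t i <= t i.+1, g @` `[t i, t i.+1] = arc_img (alpha i),
              g (t i) = alpha i 0 & g (t i.+1) = alpha i 1]].

(* Main.v *)
Require Import Defs.
From HB Require Import structures.
From mathcomp Require Import all_boot all_order all_algebra.
From mathcomp Require Import all_classical all_reals all_analysis.
From mathcomp Require Import Rstruct Rstruct_topology.
From mathcomp Require Import zify ring lra.
Import Order.TTheory GRing.Theory Num.Theory.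
Local Open Scope classical_set_scope.
Local Open Scope ring_scope.
Set Implicit Arguments. Unset Strict Implicit. Unset Printing Implicit Defensive.
Local Notation R := Rdefinitions.R.

Definition UU (n : nat) (a : nat -> set plane) (i : nat) :=
  interior (a i `|` a ((i.+1) %% n)%N).

Lemma rc_closed (A : set plane) : regular_closed A -> closed A.
Proof. by rewrite /regular_closed => <-; exact: closed_closure. Qed.

Lemma int_disj (n : nat) (a : nat -> set plane) :
  (forall i j, (i < j)%N -> (j < n)%N -> rc_prod (a i) (a j) = set0) ->
  forall i j x, (i < n)%N -> (j < n)%N -> i <> j ->
    interior (a i) x -> interior (a j) x -> False.
Proof.
move=> Hp i j x ilt jlt nij Hi Hj.
have H : forall i j, (i < j)%N -> (j < n)%N -> interior (a i) x -> interior (a j) x -> False.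
  move=> i0 j0 ij jn H1 H2.
  have : interior (a i0 `&` a j0) x by rewrite interiorI.
  move/(@subset_closure _ _ x); rewrite -/(rc_prod _ _) Hp //.
case: (ltngtP i j) => [ij|ji|eij]; first exact: (H i j).
  exact: (H j i).
by [].
Qed.

Lemma open_minus_closed (O A B : set plane) :
  open O -> closed A -> O `<=` A `|` B -> O `\` A `<=` interior B.
Proof.
move=> oO cA OAB.
have oD : open (O `\` A) by rewrite setDE; apply: openI => //; rewrite openC.
rewrite -open_subsetE // => z [Oz nAz].
by case: (OAB z Oz).
Qed.

Lemma open_sub_int (O B : set plane) : open O -> O `<=` B -> O `<=` interior B.
Proof. by move=> oO; rewrite open_subsetE. Qed.

Lemma succ_mod (n i : nat) : (i < n)%N ->
  (((i.+1) %% n)%N = i.+1 /\ (i.+1 < n)%N) \/ (((i.+1) %% n)%N = 0%N /\ i.+1 = n).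
Proof.
move=> ilt; case: (ltngtP i.+1 n) => h.
- by left; rewrite modn_small.
- lia.
- by right; rewrite h modnn.
Qed.

Lemma adj_int (n : nat) (a : nat -> set plane) :
  (3 <= n)%N ->
  (forall i, (i < n)%N -> regular_closed (a i)) ->
  (forall i j, (i < j)%N -> (j < n)%N -> rc_prod (a i) (a j) = set0) ->
  forall i x, (i < n)%N -> UU n a i x -> UU n a ((i.+1) %% n)%N x ->
    interior (a ((i.+1) %% n)%N) x.
Proof.
move=> n3 Hrc Hp i x ilt H1 H2.
set i' := ((i.+1) %% n)%N; set i'' := ((i'.+1) %% n)%N.
have i'lt : (i' < n)%N by rewrite /i' ltn_pmod //; lia.
have i''lt : (i'' < n)%N by rewrite /i'' ltn_pmod //; lia.
have oN : open (UU n a i `&` UU n a i') by apply: openI; exact: open_interior.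
suff : UU n a i `&` UU n a i' `<=` a i'.
  by move/(open_sub_int oN); apply; split.
move=> z Nz; case: (pselect (a i' z)) => // nz; exfalso.
have O1 : (UU n a i `&` UU n a i') `\` a i' `<=` interior (a i).
  apply: (open_minus_closed oN (rc_closed (Hrc _ i'lt))).
  by move=> y [/interior_subset [] Hy _]; [right|left].
have O2 : (UU n a i `&` UU n a i') `\` a i' `<=` interior (a i'').
  apply: (open_minus_closed oN (rc_closed (Hrc _ i'lt))).
  by move=> y [_ /interior_subset].
apply: (int_disj Hp (i := i) (j := i'') (x := z)) => //.
- rewrite /i'' /i'; case: (succ_mod ilt) => [[-> h]|[-> h]].
    by case: (succ_mod h) => [[-> ?]|[-> ?]]; lia.
  by rewrite modn_small; lia.
- by apply: O1.
- by apply: O2.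
Qed.

Lemma no_open3 (O A B C : set plane) z : open O -> O z -> closed A ->
  O `<=` A `|` B -> O `<=` C ->
  (forall y, interior A y -> C y -> False) ->
  (forall y, interior B y -> C y -> False) -> False.
Proof.
move=> oO Oz cA OAB OC HA HB.
have OA : O `<=` A.
  move=> y Oy; case: (pselect (A y)) => // nAy; exfalso.
  apply: (HB y); last exact: OC.
  by apply: (open_minus_closed oO cA OAB).
by apply: (HA z); [exact: (open_sub_int oO OA)|exact: OC].
Qed.

Lemma nonadj_disj (n : nat) (a : nat -> set plane) :
  (3 <= n)%N ->
  (forall i, (i < n)%N -> regular_closed (a i)) ->
  (forall i j, (i < j)%N -> (j < n)%N -> rc_prod (a i) (a j) = set0) ->
  forall i j x, (i < n)%N -> (j < n)%N -> i <> j ->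
    j <> ((i.+1) %% n)%N -> i <> ((j.+1) %% n)%N ->
    UU n a i x -> UU n a j x -> False.
Proof.
move=> n3 Hrc Hp i j x ilt jlt nij h1 h2 H1 H2.
set i' := ((i.+1) %% n)%N in h1 H1; set j' := ((j.+1) %% n)%N in h2 H2.
have i'lt : (i' < n)%N by rewrite /i' ltn_pmod //; lia.
have j'lt : (j' < n)%N by rewrite /j' ltn_pmod //; lia.
have ij' : i' <> j'.
  rewrite /i' /j'; case: (succ_mod ilt) => [[-> ?]|[-> ?]];
  case: (succ_mod jlt) => [[-> ?]|[-> ?]]; lia.
have oN : open (UU n a i `&` UU n a j) by apply: openI; exact: open_interior.
have NA : UU n a i `&` UU n a j `<=` a i.
  move=> y Ny; case: (pselect (a i y)) => // nAy; exfalso.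
  have oO : open ((UU n a i `&` UU n a j) `\` a i).
    by rewrite setDE; apply: openI => //; rewrite openC; exact: rc_closed (Hrc _ ilt).
  apply: (@no_open3 _ (a j) (a j') (interior (a i')) y oO) => //.
  - exact: rc_closed (Hrc _ jlt).
  - by move=> w [[_ /interior_subset]].
  - apply: (open_minus_closed oN (rc_closed (Hrc _ ilt))).
    by move=> w [/interior_subset].
  - by move=> w; apply: (int_disj Hp jlt i'lt).
  - by move=> w; apply: (int_disj Hp j'lt i'lt); auto.
apply: (@no_open3 _ (a j) (a j') (interior (a i)) x oN) => //.
- exact: rc_closed (Hrc _ jlt).
- by move=> w [_ /interior_subset].
- exact: open_sub_int.
- by move=> w; apply: (int_disj Hp jlt ilt); auto.
- by move=> w; apply: (int_disj Hp j'lt ilt); auto.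
Qed.

Lemma rc_int_nonempty (A : set plane) : regular_closed A -> A !=set0 ->
  exists p, interior A p.
Proof.
rewrite /regular_closed => HA [x Ax].
case: (pselect (exists p, interior A p)) => // nE; exfalso.
have : interior A = set0.
  by apply/seteqP; split => // p Ip; apply: nE; exists p.
by move=> E; move: Ax; rewrite -HA E closure0.
Qed.

Definition lerp (a b : plane) (t : R) : plane :=
  ((1 - t) * a.1 + t * b.1, (1 - t) * a.2 + t * b.2).

Definition seg (a b : plane) : set plane :=
  [set x | exists t : R, 0 <= t <= 1 /\ x = lerp a b t].

Lemma lerp0 a b : lerp a b 0 = a.
Proof. by case: a => x y; rewrite /lerp /=; congr (_, _); ring. Qed.

Lemma lerp1 a b : lerp a b 1 = b.
Proof. by case: b => x y; rewrite /lerp /=; congr (_, _); ring. Qed.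

Lemma seg_l a b : seg a b a.
Proof. by exists 0; rewrite lerp0; split => //; lra. Qed.

Lemma seg_r a b : seg a b b.
Proof. by exists 1; rewrite lerp1; split => //; lra. Qed.

Lemma seg_subl a b x : seg a b x -> seg a x `<=` seg a b.
Proof.
move=> [s [hs ->]] y [t [ht ->]]; exists (t * s); split; first nra.
by rewrite /lerp /=; congr (_, _); ring.
Qed.

Lemma seg_subr a b x : seg a b x -> seg x b `<=` seg a b.
Proof.
move=> [s [hs ->]] y [t [ht ->]]; exists (s + t * (1 - s)); split; first nra.
by rewrite /lerp /=; congr (_, _); ring.
Qed.

Lemma seg_sym a b : seg a b `<=` seg b a.
Proof.
move=> y [t [ht ->]]; exists (1 - t); split; first lra.
by rewrite /lerp /=; congr (_, _); ring.
Qed.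

Lemma backtrack u p w x : seg u p x -> seg p w x -> x <> p ->
  seg u p w \/ seg p w u.
Proof.
case: u => u1 u2; case: p => p1 p2; case: w => w1 w2.
move=> [s [hs ->]] [r [hr]]; rewrite /lerp /= => [[e1 e2]] nx.
have s1 : s != 1.
  by apply/eqP => es; apply: nx; rewrite es; congr (_, _); ring.
have r0 : r != 0.
  by apply/eqP => er; apply: nx; rewrite e1 e2 er; congr (_, _); ring.
have rp : 0 < r by rewrite lt_neqAle eq_sym r0; case/andP: hr.
have sp : 0 < 1 - s by rewrite subr_gt0 lt_neqAle s1; case/andP: hs.
have f1 : r * w1 = (1 - s) * u1 + (r - 1 + s) * p1 by lra.
have f2 : r * w2 = (1 - s) * u2 + (r - 1 + s) * p2 by lra.
case: (lerP (1 - s) r) => h.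
- left; exists (1 - (1 - s) / r); split.
    have q0 : 0 <= (1 - s) / r by rewrite divr_ge0 //; lra.
    have q1 : (1 - s) / r <= 1 by rewrite ler_pdivrMr // mul1r.
    lra.
  rewrite /lerp /=; congr (_, _); apply: (mulfI r0); rewrite ?f1 ?f2; field; exact: r0.
- right; exists (r / (1 - s)); split.
    have q0 : 0 <= r / (1 - s) by rewrite divr_ge0 //; lra.
    have q1 : r / (1 - s) <= 1 by rewrite ler_pdivrMr // mul1r; lra.
    lra.
  rewrite /lerp /=; congr (_, _); apply: (mulfI (lt0r_neq0 sp)).
    have -> : (1 - s) * u1 = r * w1 - (r - 1 + s) * p1 by lra.
    field; lra.
  have -> : (1 - s) * u2 = r * w2 - (r - 1 + s) * p2 by lra.
  field; lra.
Qed.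

Lemma open_box (U : set plane) (q : plane) : open U -> U q ->
  exists e : R, 0 < e /\ forall z : plane,
    `|z.1 - q.1| < e -> `|z.2 - q.2| < e -> U z.
Proof.
move=> oU Uq.
have : nbhs q U by apply: open_nbhs_nbhs.
move/nbhs_ballP => [e e0 H]; exists e; split => //.
move=> z h1 h2; apply: H.
by rewrite /ball /= /prod_ball /ball /= !(distrC q.1) !(distrC q.2).
Qed.

Lemma box_open (B : set plane) :
  (forall z, B z -> exists e : R, 0 < e /\ forall y : plane,
    `|y.1 - z.1| < e -> `|y.2 - z.2| < e -> B y) -> open B.
Proof.
move=> H; rewrite openE => z Bz.
case: (H z Bz) => e [e0 He]; rewrite /interior.
apply/nbhs_ballP; exists e => // y.
rewrite /ball /= /prod_ball /ball /= => -[h1 h2].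
by apply: He; rewrite distrC.
Qed.

Lemma box_seg (z y x : plane) (e : R) :
  `|y.1 - z.1| < e -> `|y.2 - z.2| < e -> seg z y x ->
  `|x.1 - z.1| < e /\ `|x.2 - z.2| < e.
Proof.
move=> h1 h2 [t [ht ->]]; rewrite /lerp /=.
have E1 : (1 - t) * z.1 + t * y.1 - z.1 = t * (y.1 - z.1) by ring.
have E2 : (1 - t) * z.2 + t * y.2 - z.2 = t * (y.2 - z.2) by ring.
have tn : `|t| <= 1 by rewrite ger0_norm; case/andP: ht.
rewrite E1 E2 !normrM; split.
  apply: le_lt_trans h1; exact: ler_piMl.
apply: le_lt_trans h2; exact: ler_piMl.
Qed.

Definition polypath (U : set plane) (p q : plane) :=
  exists (d : nat) (w : nat -> plane), [/\ w 0%N = p, w d = q &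
    forall j, (j < d)%N -> seg (w j) (w j.+1) `<=` U].

Lemma polypath_ext U p q z : polypath U p q -> seg q z `<=` U -> polypath U p z.
Proof.
move=> [d [w [w0 wd Hs]]] Hz.
exists d.+1, (fun j => if (j <= d)%N then w j else z); split.
- by rewrite leq0n.
- by rewrite ltnn.
move=> j jlt; case: (ltngtP j d) => h.
- by apply: Hs.
- by move: jlt h; clear; lia.
- by rewrite h wd.
Qed.

Lemma polypath_conn (U : set plane) p q : open U -> connected U ->
  U p -> U q -> polypath U p q.
Proof.
move=> oU cU Up Uq.
set B := [set z | U z /\ polypath U p z].
have Bp : B p.
  split => //; exists 0%N, (fun _ => p); split => //.
have boxU : forall z, U z -> exists e : R, 0 < e /\ forall y : plane,
    `|y.1 - z.1| < e -> `|y.2 - z.2| < e -> U y.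
  by move=> z Uz; apply: open_box.
have oB : open B.
  apply: box_open => z [Uz Pz]; case: (boxU z Uz) => e [e0 He].
  exists e; split => // y h1 h2; split; first exact: He.
  apply: (polypath_ext Pz) => x /(box_seg h1 h2) [].
  exact: He.
have oC : open (U `\` B).
  apply: box_open => z [Uz nBz]; case: (boxU z Uz) => e [e0 He].
  exists e; split => // y h1 h2; split; first exact: He.
  move=> [_ Py]; apply: nBz; split => //.
  apply: (polypath_ext Py) => x /seg_sym /(box_seg h1 h2) [].
  exact: He.
have : B = U.
  apply: cU.
  - by exists p.
  - exists B => //; apply/seteqP; split => x; first by move=> Bx; split => //; case: Bx.
    by case.
  - exists (~` (U `\` B)); first by rewrite closedC.
    apply/seteqP; split => x.
      by move=> [Ux Px]; split => // -[_]; apply.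
    move=> [Ux nx]; case: (pselect (polypath U p x)) => h; first by split.
    by exfalso; apply: nx; split => // -[_ ?]; apply: h.
move=> EB; have : B q by rewrite EB.
by case.
Qed.

Definition clamp (x : R) : R := Num.min (Num.max x 0) 1.

Lemma clamp1 x : 1 <= x -> clamp x = 1.
Proof. move=> h; rewrite /clamp; have -> : Num.max x 0 = x by rewrite max_l //; lra.
by rewrite min_r. Qed.

Lemma clamp0 x : x <= 0 -> clamp x = 0.
Proof. move=> h; rewrite /clamp max_r // min_l //. Qed.

Lemma clampid x : 0 <= x <= 1 -> clamp x = x.
Proof. move=> /andP[h1 h2]; rewrite /clamp max_l // min_l //. Qed.

Lemma clamp_cont : continuous clamp.
Proof.
move=> x.
have -> : clamp = (fun y : R^o => y) \max (fun _ => 0 : R^o) \min (fun _ => 1 : R^o).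
  by apply/funext => y.
apply: continuous_min; last exact: cvg_cst.
apply: continuous_max; first exact: cvg_id.
exact: cvg_cst.
Qed.

Lemma pair_cont (f g : R -> R) : continuous f -> continuous g ->
  continuous (fun s => (f s, g s) : plane).
Proof. move=> cf cg x; exact: (cvg_pair (cf x) (cg x)). Qed.

Lemma cont_add (f g : R -> R) : continuous f -> continuous g ->
  continuous (fun x => f x + g x).
Proof. move=> cf cg x; exact: (@continuousD R R^o R f g x (cf x) (cg x)). Qed.

Lemma cont_sub (f g : R -> R) : continuous f -> continuous g ->
  continuous (fun x => f x - g x).
Proof. move=> cf cg x; exact: (@continuousB R R^o R f g x (cf x) (cg x)). Qed.

Lemma cont_mul (f g : R -> R) : continuous f -> continuous g ->
  continuous (fun x => f x * g x).
Proof. move=> cf cg x; exact: (@continuousM R R f g x (cf x) (cg x)). Qed.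

Lemma cont_cst (c : R) : continuous (fun _ : R => c).
Proof. move=> x; exact: cvg_cst. Qed.

Lemma cont_id : continuous (fun x : R => x).
Proof. move=> x; exact: cvg_id. Qed.

Lemma cont_comp (f g : R -> R) : continuous f -> continuous g ->
  continuous (fun x => g (f x)).
Proof. move=> cf cg x; exact: (@continuous_comp _ _ _ f g x (cf x) (cg (f x))). Qed.

Definition gsum (F : nat -> R -> R) (N M : nat) (s : R) : R :=
  \sum_(j < M) (F j (clamp (N%:R * s - j%:R)) - F j 0).

Definition glue (N : nat) (F : nat -> R -> R) (s : R) : R :=
  F 0%N 0 + gsum F N N s.

Lemma gsum_eval F N k s :
  (forall j, (j.+1 < N)%N -> F j 1 = F j.+1 0) -> (k < N)%N ->
  k%:R <= N%:R * s <= k.+1%:R ->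
  forall M, (M <= N)%N -> gsum F N M s =
    if (M <= k)%N then F M 0 - F 0%N 0 else F k (N%:R * s - k%:R) - F 0%N 0.
Proof.
move=> HF kN /andP[h1 h2]; elim=> [|M IH] MN.
  by rewrite /gsum big_ord0 leq0n subrr.
rewrite /gsum big_ord_recr /= -/(gsum F N M s) IH; last lia.
case: (ltngtP M k) => h.
- rewrite clamp1; last first.
    have : (M.+1)%:R <= k%:R :> R by rewrite ler_nat.
    rewrite -natr1; lra.
  rewrite HF; last lia.
  lra.
- rewrite clamp0; last first.
    have : (k.+1)%:R <= M%:R :> R by rewrite ler_nat.
    lra.
  lra.
- rewrite h clampid; last first.
    by rewrite -natr1 in h2; apply/andP; split; lra.
  rewrite -h; lra.
Qed.

Lemma glueE F N k s :
  (forall j, (j.+1 < N)%N -> F j 1 = F j.+1 0) -> (k < N)%N ->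
  k%:R <= N%:R * s <= k.+1%:R ->
  glue N F s = F k (N%:R * s - k%:R).
Proof.
move=> HF kN hs; rewrite /glue (gsum_eval HF kN hs (leqnn N)).
by rewrite leqNgt kN /= addrC subrK.
Qed.

Lemma glue_cont F N : (forall j, continuous (F j)) -> continuous (glue N F).
Proof.
move=> HF; rewrite /glue /gsum.
have H : forall M, continuous (fun s : R => \sum_(j < M) (F j (clamp (N%:R * s - j%:R)) - F j 0)).
  elim=> [|M IH].
    by under eq_fun do rewrite big_ord0; exact: cont_cst.
  under eq_fun do rewrite big_ord_recr /=.
  apply: cont_add; first exact: IH.
  apply: cont_sub; last exact: cont_cst.
  apply: (@cont_comp (fun s : R => clamp (N%:R * s - M%:R))); last exact: HF.
  apply: (@cont_comp (fun s : R => N%:R * s - M%:R)); last exact: clamp_cont.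
  apply: cont_sub; last exact: cont_cst.
  apply: cont_mul; [exact: cont_cst|exact: cont_id].
apply: cont_add; first exact: cont_cst.
exact: H.
Qed.

Definition gluep (N : nat) (F : nat -> R -> plane) (s : R) : plane :=
  (glue N (fun j t => (F j t).1) s, glue N (fun j t => (F j t).2) s).

Lemma gluepE F N k s :
  (forall j, (j.+1 < N)%N -> F j 1 = F j.+1 0) -> (k < N)%N ->
  k%:R <= N%:R * s <= k.+1%:R ->
  gluep N F s = F k (N%:R * s - k%:R).
Proof.
move=> HF kN hs; rewrite /gluep (glueE (F := fun j t => (F j t).1) _ kN hs).
  rewrite (glueE (F := fun j t => (F j t).2) _ kN hs).
    by case: (F k _).
  by move=> j hj; rewrite HF.
by move=> j hj; rewrite HF.
Qed.

Lemma gluep_cont F N : (forall j, continuous (fun t => (F j t).1)) ->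
  (forall j, continuous (fun t => (F j t).2)) -> continuous (gluep N F).
Proof.
move=> H1 H2; apply: pair_cont; exact: glue_cont.
Qed.

Lemma piece (d : nat) (x : R) : (0 < d)%N -> 0 <= x <= d%:R ->
  exists k, (k < d)%N /\ k%:R <= x <= k.+1%:R.
Proof.
elim: d => [//|d IH] _ /andP[x0 xd].
case: (posnP d) => [d0|dpos].
  by exists 0%N; split => //; rewrite d0 in xd; apply/andP; split.
case: (lerP x d%:R) => h.
  by case: (IH dpos) => [|k [kd hk]]; [apply/andP|exists k; split => //; lia].
by exists d; split => //; apply/andP; split => //; apply: ltW.
Qed.

Definition pline (d : nat) (w : nat -> plane) : R -> plane :=
  gluep d (fun j t => lerp (w j) (w j.+1) t).

Lemma plineE d w k s : (k < d)%N -> k%:R <= d%:R * s <= k.+1%:R ->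
  pline d w s = lerp (w k) (w k.+1) (d%:R * s - k%:R).
Proof.
move=> kd hs; rewrite /pline (gluepE _ kd hs) //.
by move=> j _; rewrite lerp1 lerp0.
Qed.

Lemma pline_cont d w : continuous (pline d w).
Proof.
apply: gluep_cont => j /=.
  apply: cont_add; apply: cont_mul; try exact: cont_cst; try exact: cont_id.
  by apply: cont_sub; [exact: cont_cst|exact: cont_id].
apply: cont_add; apply: cont_mul; try exact: cont_cst; try exact: cont_id.
by apply: cont_sub; [exact: cont_cst|exact: cont_id].
Qed.

Lemma pline0 d w : (0 < d)%N -> pline d w 0 = w 0%N.
Proof.
move=> dp; rewrite (@plineE _ _ 0%N) //; last by rewrite mulr0 lexx ler0n.
by rewrite mulr0 subr0 lerp0.
Qed.

Lemma pline1 d w : (0 < d)%N -> pline d w 1 = w d.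
Proof.
move=> dp; have e : d = d.-1.+1 by lia.
rewrite (@plineE _ _ d.-1) //; last by rewrite mulr1 -e lexx ler_nat leq_pred.
  have hd : d%:R = (d.-1)%:R + 1 :> R by rewrite {1}e -natr1.
  have -> : d%:R * 1 - (d.-1)%:R = 1 :> R by rewrite mulr1 hd; ring.
  by rewrite lerp1 -e.
lia.
Qed.

Lemma pline_piece d w s : (0 < d)%N -> 0 <= s <= 1 ->
  exists k, [/\ (k < d)%N, k%:R <= d%:R * s <= k.+1%:R &
    pline d w s = lerp (w k) (w k.+1) (d%:R * s - k%:R)].
Proof.
move=> dp /andP[s0 s1].
have dpos : 0 < d%:R :> R by rewrite ltr0n.
case: (@piece d (d%:R * s) dp).
  apply/andP; split; first by apply: mulr_ge0 => //; apply: ltW.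
  by rewrite -{2}(mulr1 d%:R) ler_wpM2l // ltW.
move=> k [kd hk]; exists k; split => //; exact: plineE.
Qed.

Lemma pline_seg d w s : (0 < d)%N -> 0 <= s <= 1 ->
  exists2 k, (k < d)%N & seg (w k) (w k.+1) (pline d w s).
Proof.
move=> dp hs; case: (pline_piece w dp hs) => k [kd hk ->].
exists k => //; exists (d%:R * s - k%:R); split => //.
by rewrite -natr1 in hk; apply/andP; case/andP: hk => h1 h2; split; lra.
Qed.

Lemma lerp_inj a b u v : a <> b -> lerp a b u = lerp a b v -> u = v.
Proof.
case: a => a1 a2; case: b => b1 b2 nab; rewrite /lerp /= => -[e1 e2].
case: (eqVneq a1 b1) => [h1|h1].
  case: (eqVneq a2 b2) => [h2|h2]; first by exfalso; apply: nab; rewrite h1 h2.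
  have : (u - v) * (b2 - a2) = 0 by lra.
  move/eqP; rewrite mulf_eq0 => /orP[/eqP|/eqP]; first lra.
  by move=> h; exfalso; move/eqP: h2; apply; lra.
have : (u - v) * (b1 - a1) = 0 by lra.
move/eqP; rewrite mulf_eq0 => /orP[/eqP|/eqP]; first lra.
by move=> h; exfalso; move/eqP: h1; apply; lra.
Qed.

Definition path_simple (d : nat) (w : nat -> plane) :=
  (forall k, (k < d)%N -> w k <> w k.+1) /\
  (forall k l x, (k < l)%N -> (l < d)%N -> seg (w k) (w k.+1) x ->
     seg (w l) (w l.+1) x -> l = k.+1 /\ x = w k.+1).

Lemma pline_inj d w s s' : (0 < d)%N -> path_simple d w ->
  0 <= s <= 1 -> 0 <= s' <= 1 -> pline d w s = pline d w s' -> s = s'.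
Proof.
move=> dp [S0 S1] hs hs' e.
have dpos : 0 < d%:R :> R by rewrite ltr0n.
suff : d%:R * s = d%:R * s'.
  by move/(mulfI (lt0r_neq0 dpos)).
have key : forall s s', 0 <= s <= 1 -> 0 <= s' <= 1 -> pline d w s = pline d w s' ->
   forall k k', (k <= k')%N -> (k' < d)%N -> k%:R <= d%:R * s <= k.+1%:R ->
   k'%:R <= d%:R * s' <= k'.+1%:R -> d%:R * s = d%:R * s'.
  move=> t t' ht ht' et k k' kk' k'd hk hk'.
  have kd : (k < d)%N by lia.
  move: et; rewrite (plineE _ kd hk) (plineE _ k'd hk') => et.
  have : (k < k')%N \/ k = k' by lia.
  case=> [hlt|heq]; last first.
    move: et; rewrite heq => /(lerp_inj (S0 _ k'd)); lra.
  have sk : seg (w k) (w k.+1) (lerp (w k) (w k.+1) (d%:R * t - k%:R)).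
    exists (d%:R * t - k%:R); split => //.
    by rewrite -natr1 in hk; case/andP: hk => h1 h2; apply/andP; split; lra.
  have sk' : seg (w k') (w k'.+1) (lerp (w k) (w k.+1) (d%:R * t - k%:R)).
    rewrite et; exists (d%:R * t' - k'%:R); split => //.
    by rewrite -natr1 in hk'; case/andP: hk' => h1 h2; apply/andP; split; lra.
  case: (S1 _ _ _ hlt k'd sk sk') => ek' ex.
  have u1 : d%:R * t - k%:R = 1.
    by apply: (lerp_inj (S0 _ kd)); rewrite ex lerp1.
  have u0 : d%:R * t' - k'%:R = 0.
    apply: (lerp_inj (S0 _ k'd)); rewrite -et ex lerp0 ek' //.
  rewrite ek' -natr1 in u0; lra.
case: (pline_piece w dp hs) => k [kd hk _].
case: (pline_piece w dp hs') => k' [k'd hk' _].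
case: (leqP k k') => h.
  exact: (key s s' hs hs' e k k').
apply/esym; apply: (key s' s hs' hs (esym e) k' k) => //; lia.
Qed.

Definition repl (w : nat -> plane) (k l : nat) (x : plane) : nat -> plane :=
  fun t => if (t <= k)%N then w t else if t == k.+1 then x else w (t + l - k.+1)%N.

Lemma repl_prop (U : set plane) d w k l x : (k <= l)%N -> (l <= d)%N ->
  (forall j, (j < d)%N -> seg (w j) (w j.+1) `<=` U) ->
  seg (w k) x `<=` U -> ((l < d)%N -> seg x (w l.+1) `<=` U) ->
  [/\ repl w k l x 0%N = w 0%N,
      repl w k l x (k.+1 + (d - l))%N = (if (l < d)%N then w d else x) &
      forall j, (j < k.+1 + (d - l))%N ->
        seg (repl w k l x j) (repl w k l x j.+1) `<=` U].
Proof.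
move=> kl ld Hs H1 H2; rewrite /repl; split.
- by rewrite leq0n.
- have E1 : (k.+1 + (d - l) <= k)%N = false by lia.
  rewrite E1; case: (ltnP l d) => hl.
    have E2 : (k.+1 + (d - l) == k.+1)%N = false by apply/eqP; lia.
    rewrite E2; by have -> : (k.+1 + (d - l) + l - k.+1 = d)%N by lia.
  have E2 : (k.+1 + (d - l) == k.+1)%N = true by apply/eqP; lia.
  by rewrite E2.
move=> j jlt.
case: (ltnP j k) => h.
  have e1 : (j <= k)%N = true by lia.
  by rewrite e1; apply: Hs; lia.
case: (eqVneq j k) => [->|nj].
  by rewrite ?leqnn ?ltnn ?eqxx; exact: H1.
have e1 : (j <= k)%N = false by lia.
have e2 : (j.+1 <= k)%N = false by lia.
rewrite ?e1 ?e2; case: (eqVneq j k.+1) => [ej|nj'].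
  have e3 : (k.+2 == k.+1)%N = false by apply/eqP; lia.
  rewrite ?ej ?eqxx ?e3.
  have -> : (k.+2 + l - k.+1 = l.+1)%N by lia.
  by apply: H2; lia.
have e4 : (j.+1 == k.+1)%N = false by apply/eqP; lia.
rewrite ?e4.
have -> : (j.+1 + l - k.+1 = (j + l - k.+1).+1)%N by lia.
by apply: Hs; lia.
Qed.

Definition suff (w : nat -> plane) (l : nat) (y : plane) : nat -> plane :=
  fun t => if t == 0%N then y else w (t + l)%N.

Lemma suff_prop (U : set plane) d w l y : (l <= d)%N ->
  (forall j, (j < d)%N -> seg (w j) (w j.+1) `<=` U) ->
  ((l < d)%N -> seg y (w l.+1) `<=` U) -> ((l = d) -> y = w d) ->
  [/\ suff w l y 0%N = y, suff w l y (d - l)%N = w d &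
      forall j, (j < d - l)%N -> seg (suff w l y j) (suff w l y j.+1) `<=` U].
Proof.
move=> ld Hs H1 H2; rewrite /suff; split.
- by [].
- case: (eqVneq (d - l)%N 0%N) => h.
    by apply: H2; lia.
  by have -> : (d - l + l = d)%N by lia.
move=> j jlt; case: (eqVneq j 0%N) => [->|nj] /=.
  by rewrite add1n; apply: H1; lia.
have -> : (j.+1 + l = (j + l).+1)%N by lia.
by apply: Hs; lia.
Qed.

Definition upd {T : Type} (f : nat -> T) (i : nat) (v : T) : nat -> T :=
  fun j => if j == i then v else f j.

Definition cfg (n : nat) (a : nat -> set plane) (d : nat -> nat)
    (w : nat -> nat -> plane) :=
  forall i, (i < n)%N ->
   [/\ interior (a i) (w i 0%N), w i (d i) = w ((i.+1) %% n)%N 0%N &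
       forall j, (j < d i)%N -> seg (w i j) (w i j.+1) `<=` UU n a i].

Definition size (n : nat) (d : nat -> nat) := (\sum_(i < n) d i)%N.

Lemma size_lt n d d' : (forall j, (j < n)%N -> (d' j <= d j)%N) ->
  (exists2 j, (j < n)%N & (d' j < d j)%N) -> (size n d' < size n d)%N.
Proof.
move=> Hle [j jn hj]; rewrite /size.
rewrite [X in (X < _)%N](bigD1 (Ordinal jn)) //= [X in (_ < X)%N](bigD1 (Ordinal jn)) //=.
rewrite -addSn; apply: leq_add => //.
by apply: leq_sum => i _; apply: Hle.
Qed.

Lemma succ_inj n i j : (i < n)%N -> (j < n)%N ->
  ((i.+1) %% n)%N = ((j.+1) %% n)%N -> i = j.
Proof.
move=> ilt jlt; case: (succ_mod ilt) => [[-> ?]|[-> ?]];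
  case: (succ_mod jlt) => [[-> ?]|[-> ?]]; lia.
Qed.

Lemma succ_lt n i : (i < n)%N -> (((i.+1) %% n) < n)%N.
Proof. move=> ilt; rewrite ltn_pmod //; lia. Qed.

Lemma succ_neq n i : (2 <= n)%N -> (i < n)%N -> ((i.+1) %% n)%N <> i.
Proof. move=> n2 ilt; case: (succ_mod ilt) => [[-> ?]|[-> ?]]; lia. Qed.

Lemma succ2_neq n i : (3 <= n)%N -> (i < n)%N ->
  ((((i.+1) %% n).+1) %% n)%N <> i.
Proof.
move=> n3 ilt; case: (succ_mod ilt) => [[-> h]|[-> ?]].
  by case: (succ_mod h) => [[-> ?]|[-> ?]]; lia.
by rewrite modn_small; lia.
Qed.

Lemma upd1 n a d w i d0 w0 : (3 <= n)%N -> cfg n a d w -> (i < n)%N ->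
  w0 0%N = w i 0%N -> w0 d0 = w i (d i) ->
  (forall j, (j < d0)%N -> seg (w0 j) (w0 j.+1) `<=` UU n a i) ->
  (d0 < d i)%N ->
  cfg n a (upd d i d0) (upd w i w0) /\
  (size n (upd d i d0) < size n d)%N.
Proof.
move=> n3 C ilt h0 hd hs dlt; split; last first.
  apply: size_lt; last by exists i => //; rewrite /upd eqxx.
  by move=> j _; rewrite /upd; case: eqP => // ->; apply: ltnW.
move=> j jlt; rewrite /upd; case: (C j jlt) => c1 c2 c3.
case: (eqVneq j i) => [->|nji].
  split => //; first by rewrite h0; case: (C i ilt).
  rewrite hd; case: (C i ilt) => _ -> _.
  by rewrite ifN_eq //; apply/eqP; apply: succ_neq => //; lia.
split => //; case: (eqVneq ((j.+1) %% n)%N i) => [e|ne] //.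
by rewrite h0 c2 e.
Qed.

Lemma upd2 n a d w i y d1 w1 d2 w2 : (3 <= n)%N -> cfg n a d w -> (i < n)%N ->
  interior (a ((i.+1) %% n)%N) y ->
  w1 0%N = w i 0%N -> w1 d1 = y ->
  (forall j, (j < d1)%N -> seg (w1 j) (w1 j.+1) `<=` UU n a i) ->
  w2 0%N = y -> w2 d2 = w ((i.+1) %% n)%N (d ((i.+1) %% n)%N) ->
  (forall j, (j < d2)%N -> seg (w2 j) (w2 j.+1) `<=` UU n a ((i.+1) %% n)%N) ->
  (d1 <= d i)%N -> (d2 <= d ((i.+1) %% n)%N)%N ->
  (d1 < d i)%N \/ (d2 < d ((i.+1) %% n)%N)%N ->
  cfg n a (upd (upd d i d1) ((i.+1) %% n)%N d2)
          (upd (upd w i w1) ((i.+1) %% n)%N w2) /\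
  (size n (upd (upd d i d1) ((i.+1) %% n)%N d2) < size n d)%N.
Proof.
move=> n3 C ilt hy h10 h1d h1s h20 h2d h2s le1 le2 lt12.
set i' := ((i.+1) %% n)%N in hy h2d h2s le2 lt12 *.
have i'lt : (i' < n)%N by apply: succ_lt.
have ii' : i' <> i by apply: succ_neq => //; lia.
have nii' : (i == i') = false by apply/eqP => e; apply: ii'.
split; last first.
  apply: size_lt.
    move=> j _; rewrite /upd; case: eqP => [->|_] //.
    by case: eqP => [->|_].
  case: lt12 => h.
    by exists i => //; rewrite /upd nii' eqxx.
  by exists i' => //; rewrite /upd eqxx.
move=> j jlt; rewrite /upd.
case: (eqVneq j i') => [->|nji'].
  rewrite ?eqxx; split => //; first by rewrite h20.
  rewrite h2d; case: (C i' i'lt) => _ -> _.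
  have e1 : ((i'.+1 %% n)%N == i') = false by apply/eqP; apply: succ_neq => //; lia.
  have e2 : ((i'.+1 %% n)%N == i) = false by apply/eqP; apply: succ2_neq => //.
  by rewrite ?e1 ?e2.
case: (eqVneq j i) => [->|nji].
  rewrite ?nii' ?eqxx; split => //; first by rewrite h10; case: (C i ilt).
  by rewrite h1d /i' ?eqxx.
case: (C j jlt) => c1 c2 c3; split => //.
case: (eqVneq ((j.+1) %% n)%N i') => [e|ne].
  by exfalso; move/eqP: nji; apply; exact: (succ_inj jlt ilt e).
case: (eqVneq ((j.+1) %% n)%N i) => [e|ne'] //.
by rewrite h10 c2 e.
Qed.

Definition smaller n a d (w : nat -> nat -> plane) :=
  exists d' w', cfg n a d' w' /\ (size n d' < size n d)%N.

Lemma R_drop n a d w i v : (3 <= n)%N -> cfg n a d w -> (i < n)%N ->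
  (0 < v)%N -> (v < d i)%N -> seg (w i v.-1) (w i v.+1) `<=` UU n a i ->
  smaller n a d w.
Proof.
move=> n3 C ilt v0 vd hs.
case: (C i ilt) => c1 c2 c3.
have [h0 hend hsegs] := @repl_prop (UU n a i) (d i) (w i) v.-1 v.+1 (w i v.+1)
  ltac:(lia) ltac:(lia) c3 hs (fun h => c3 _ h).
have := @upd1 n a d w i (v.-1.+1 + (d i - v.+1))%N (repl (w i) v.-1 v.+1 (w i v.+1))
  n3 C ilt h0 _ hsegs ltac:(lia).
case.
  rewrite hend; case: ifP => // h.
  by have -> : v.+1 = d i by lia.
by move=> C' hs'; do 2 eexists; split; [exact: C'|exact: hs'].
Qed.

Lemma R0 n a d w i j : (3 <= n)%N ->
  (forall i j, (i < j)%N -> (j < n)%N -> rc_prod (a i) (a j) = set0) ->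
  cfg n a d w -> (i < n)%N -> (j < d i)%N -> w i j = w i j.+1 ->
  smaller n a d w.
Proof.
move=> n3 Hp C ilt jd e.
case: (C i ilt) => c1 c2 c3.
case: (ltnP j.+1 (d i)) => h.
  apply: (@R_drop n a d w i j.+1) => //=.
  rewrite e; exact: c3.
have dj : d i = j.+1 by lia.
case: (posnP j) => [j0|jp].
  exfalso; have i'lt := succ_lt ilt.
  apply: (int_disj Hp ilt i'lt (x := w i 0%N)).
  - by move=> h'; apply: (succ_neq (n := n) (i := i)) => //; lia.
  - exact: c1.
  - case: (C _ i'lt) => + _ _; rewrite -c2 dj -e j0 //.
apply: (@R_drop n a d w i j n3 C ilt jp); first lia.
rewrite -e; have ej : j = j.-1.+1 by lia.
by rewrite {2}ej; apply: c3; lia.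
Qed.

Lemma seg_bt u p ww x : seg u p x -> seg p ww x -> x <> p -> seg u ww `<=` seg u p `|` seg p ww.
Proof.
move=> h1 h2 nx; case: (backtrack h1 h2 nx) => h.
  by move=> z /(seg_subl h) ?; left.
by move=> z /(seg_subr h) ?; right.
Qed.

Lemma R1 n a d w i k l x : (3 <= n)%N ->
  cfg n a d w -> (i < n)%N -> (k < l)%N -> (l < d i)%N ->
  seg (w i k) (w i k.+1) x -> seg (w i l) (w i l.+1) x ->
  ~ (l = k.+1 /\ x = w i k.+1) -> smaller n a d w.
Proof.
move=> n3 C ilt kl ld hk hl nk.
case: (C i ilt) => c1 c2 c3.
case: (ltnP k.+1 l) => h.
  have [h0 hend hsegs] := @repl_prop (UU n a i) (d i) (w i) k l x
    ltac:(lia) ltac:(lia) c3 (fun z hz => c3 k ltac:(lia) _ (seg_subl hk hz))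
    (fun _ z hz => c3 _ ld _ (seg_subr hl hz)).
  have := @upd1 n a d w i (k.+1 + (d i - l))%N (repl (w i) k l x)
    n3 C ilt h0 _ hsegs ltac:(lia).
  case; first by rewrite hend ld.
  by move=> C' hs'; do 2 eexists; split; [exact: C'|exact: hs'].
have el : l = k.+1 by lia.
have nx : x <> w i k.+1 by move=> ex; apply: nk.
rewrite el in hl ld.
apply: (@R_drop n a d w i k.+1) => //=.
move=> z /(seg_bt hk hl nx) [] hz.
  by apply: (c3 k) => //; lia.
exact: (c3 k.+1).
Qed.

Lemma R2 n a d w i k l x : (3 <= n)%N ->
  (forall i, (i < n)%N -> regular_closed (a i)) ->
  (forall i j, (i < j)%N -> (j < n)%N -> rc_prod (a i) (a j) = set0) ->
  cfg n a d w -> (i < n)%N -> (k < d i)%N -> (l < d ((i.+1) %% n)%N)%N ->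
  seg (w i k) (w i k.+1) x ->
  seg (w ((i.+1) %% n)%N l) (w ((i.+1) %% n)%N l.+1) x ->
  ~ [/\ k.+1 = d i, l = 0%N & x = w i (d i)] -> smaller n a d w.
Proof.
move=> n3 Hrc Hp C ilt kd ld hk hl nk.
set i' := ((i.+1) %% n)%N in ld hl.
have i'lt : (i' < n)%N by apply: succ_lt.
case: (C i ilt) => c1 c2 c3; case: (C i' i'lt) => c1' c2' c3'.
have fin : forall y d1 w1 d2 w2, interior (a i') y ->
  w1 0%N = w i 0%N -> w1 d1 = y ->
  (forall j, (j < d1)%N -> seg (w1 j) (w1 j.+1) `<=` UU n a i) ->
  w2 0%N = y -> w2 d2 = w i' (d i') ->
  (forall j, (j < d2)%N -> seg (w2 j) (w2 j.+1) `<=` UU n a i') ->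
  (d1 <= d i)%N -> (d2 <= d i')%N -> (d1 < d i)%N \/ (d2 < d i')%N ->
  smaller n a d w.
  move=> y d1 w1 d2 w2 hy h10 h1d h1s h20 h2d h2s le1 le2 lt12.
  have [C' hs'] := upd2 n3 C ilt hy h10 h1d h1s h20 h2d h2s le1 le2 lt12.
  by do 2 eexists; split; [exact: C'|exact: hs'].
have intx : forall y, UU n a i y -> UU n a i' y -> interior (a i') y.
  by move=> y h1 h2; apply: (adj_int n3 Hrc Hp ilt).
case: (pselect ((k.+1 < d i)%N \/ (0 < l)%N)) => hcase.
  have xU : UU n a i x by apply: (c3 k kd); exact: hk.
  have xU' : UU n a i' x by apply: (c3' l ld); exact: hl.
  have [h0 hend hsegs] := @repl_prop (UU n a i) (d i) (w i) k (d i) x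
    ltac:(lia) (leqnn _) c3 (fun z hz => c3 k kd _ (seg_subl hk hz))
    (fun h => ltac:(lia)).
  have [g0 gend gsegs] := @suff_prop (UU n a i') (d i') (w i') l x
    ltac:(lia) c3' (fun _ z hz => c3' l ld _ (seg_subr hl hz)) (fun h => ltac:(lia)).
  rewrite ltnn in hend.
  apply: (fin x _ _ _ _ (intx x xU xU') h0 hend hsegs g0 gend gsegs); lia.
have kd' : k.+1 = d i by lia.
have l0 : l = 0%N by lia.
have nx : x <> w i k.+1 by move=> ex; apply: nk; split => //; rewrite -kd'.
rewrite l0 in hl ld.
have hl2 : seg (w i k.+1) (w i' 1%N) x by rewrite kd' c2.
case: (backtrack hk hl2 nx) => hb.
-
  have yU : UU n a i (w i' 1%N) by apply: (c3 k kd); exact: hb.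
  have yU' : UU n a i' (w i' 1%N) by apply: (c3' 0%N ld); exact: seg_r.
  have [h0 hend hsegs] := @repl_prop (UU n a i) (d i) (w i) k (d i) (w i' 1%N)
    ltac:(lia) (leqnn _) c3 (fun z hz => c3 k kd _ (seg_subl hb hz))
    (fun h => ltac:(lia)).
  have [g0 gend gsegs] := @suff_prop (UU n a i') (d i') (w i') 1 (w i' 1%N)
    ltac:(lia) c3' (fun h z hz => c3' 1%N h _ hz) (fun h => ltac:(rewrite -h; done)).
  rewrite ltnn in hend.
  apply: (fin (w i' 1%N) _ _ _ _ (intx _ yU yU') h0 hend hsegs g0 gend gsegs); lia.
-
  have yU : UU n a i (w i k) by apply: (c3 k kd); exact: seg_l.
  have yU' : UU n a i' (w i k).
    apply: (c3' 0%N ld); move: hb; rewrite kd' c2 //.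
  case: (posnP k) => [k0|kp].
    exfalso; apply: (int_disj Hp ilt i'lt (x := w i k)).
    - by move=> h'; apply: (succ_neq (n := n) (i := i)) => //; lia.
    - by rewrite k0.
    - exact: intx.
  have ek : k = k.-1.+1 by lia.
  have [h0 hend hsegs] := @repl_prop (UU n a i) (d i) (w i) k.-1 (d i) (w i k)
    ltac:(lia) (leqnn _) c3 (fun z hz => c3 k.-1 ltac:(lia) _ ltac:(rewrite -ek; exact hz))
    (fun h => ltac:(lia)).
  have hb' : seg (w i' 0%N) (w i' 1%N) (w i k) by rewrite -c2 -kd'.
  have [g0 gend gsegs] := @suff_prop (UU n a i') (d i') (w i') 0 (w i k)
    ltac:(lia) c3' (fun _ z hz => c3' 0%N ld _ (seg_subr hb' hz)) (fun h => ltac:(lia)).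
  rewrite ltnn in hend.
  apply: (fin (w i k) _ _ _ _ (intx _ yU yU') h0 hend hsegs g0 gend gsegs); lia.
Qed.

Definition good n (d : nat -> nat) (w : nat -> nat -> plane) :=
  forall i, (i < n)%N -> path_simple (d i) (w i) /\
   (forall k l x, (k < d i)%N -> (l < d ((i.+1) %% n)%N)%N ->
     seg (w i k) (w i k.+1) x ->
     seg (w ((i.+1) %% n)%N l) (w ((i.+1) %% n)%N l.+1) x ->
     [/\ k.+1 = d i, l = 0%N & x = w i (d i)]).

Lemma good_or_smaller n a d w : (3 <= n)%N ->
  (forall i, (i < n)%N -> regular_closed (a i)) ->
  (forall i j, (i < j)%N -> (j < n)%N -> rc_prod (a i) (a j) = set0) ->
  cfg n a d w -> good n d w \/ smaller n a d w.
Proof.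
move=> n3 Hrc Hp C.
case: (pselect (smaller n a d w)) => hs; [by right|left].
move=> i ilt; split; first split.
- by move=> k kd e; apply: hs; exact: (R0 n3 Hp C ilt kd e).
- move=> k l x kl ld hk hl.
  case: (pselect (l = k.+1 /\ x = w i k.+1)) => // h.
  by exfalso; apply: hs; exact: (R1 n3 C ilt kl ld hk hl h).
- move=> k l x kd ld hk hl.
  case: (pselect [/\ k.+1 = d i, l = 0%N & x = w i (d i)]) => // h.
  by exfalso; apply: hs; exact: (R2 n3 Hrc Hp C ilt kd ld hk hl h).
Qed.

Lemma exists_good n a d w : (3 <= n)%N ->
  (forall i, (i < n)%N -> regular_closed (a i)) ->
  (forall i j, (i < j)%N -> (j < n)%N -> rc_prod (a i) (a j) = set0) ->
  cfg n a d w -> exists d' w', cfg n a d' w' /\ good n d' w'.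
Proof.
move=> n3 Hrc Hp.
suff H : forall N d w, (size n d <= N)%N -> cfg n a d w ->
    exists d' w', cfg n a d' w' /\ good n d' w'.
  by move=> C; apply: (H (size n d) d w).
elim=> [|N IH] d0 w0 hN C.
  case: (good_or_smaller n3 Hrc Hp C) => [g|[d' [w' [_ hs]]]].
    by exists d0, w0.
  lia.
case: (good_or_smaller n3 Hrc Hp C) => [g|[d' [w' [C' hs]]]].
  by exists d0, w0.
apply: (IH d' w') => //; lia.
Qed.

Lemma dpos n a d w i : (3 <= n)%N ->
  (forall i j, (i < j)%N -> (j < n)%N -> rc_prod (a i) (a j) = set0) ->
  cfg n a d w -> (i < n)%N -> (0 < d i)%N.
Proof.
move=> n3 Hp C ilt; case: (posnP (d i)) => // h; exfalso.
have i'lt := succ_lt ilt.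
case: (C i ilt) => c1 c2 _; case: (C _ i'lt) => c1' _ _.
apply: (int_disj Hp ilt i'lt (x := w i 0%N)) => //.
- by move=> h'; apply: (succ_neq (n := n) (i := i)) => //; lia.
- by rewrite -h c2.
Qed.

Lemma arc_ok n a d w i : (3 <= n)%N ->
  (forall i j, (i < j)%N -> (j < n)%N -> rc_prod (a i) (a j) = set0) ->
  cfg n a d w -> good n d w -> (i < n)%N ->
  [/\ jordan_arc (pline (d i) (w i)), pline (d i) (w i) 0 = w i 0%N,
      pline (d i) (w i) 1 = w ((i.+1) %% n)%N 0%N &
      arc_img (pline (d i) (w i)) `<=` UU n a i].
Proof.
move=> n3 Hp C G ilt.
have dp := dpos n3 Hp C ilt.
case: (C i ilt) => c1 c2 c3.
split.
- split; first by apply: continuous_subspaceT; exact: pline_cont.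
  left; move=> s s'; rewrite !in_itv /=.
  by move=> hs hs'; apply: (pline_inj dp (proj1 (G i ilt))).
- exact: pline0.
- by rewrite pline1.
- move=> y [s hs <-]; move: hs; rewrite /= in_itv => hs.
  case: (pline_seg (w i) dp hs) => k kd hk.
  exact: (c3 k kd).
Qed.

Lemma piece_open (N : nat) (x : R) : (0 < N)%N -> 0 <= x < N%:R ->
  exists k, (k < N)%N /\ k%:R <= x < k.+1%:R.
Proof.
move=> Np /andP[x0 xN].
case: (@piece N x Np); first by apply/andP; split => //; apply: ltW.
move=> k [kN /andP[h1 h2]].
case: (eqVneq x k.+1%:R) => [e|ne].
  exists k.+1; split.
    rewrite e in xN; move: xN; rewrite ltr_nat; lia.
  by rewrite e lexx /= ltr_nat.
by exists k; split => //; rewrite h1 /= lt_neqAle ne h2.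
Qed.

Definition curve n (d : nat -> nat) (w : nat -> nat -> plane) : R -> plane :=
  gluep n (fun j => pline (d j) (w j)).

Lemma curve_eval n a d w k s : (3 <= n)%N ->
  (forall i j, (i < j)%N -> (j < n)%N -> rc_prod (a i) (a j) = set0) ->
  cfg n a d w -> (k < n)%N -> k%:R <= n%:R * s <= k.+1%:R ->
  curve n d w s = pline (d k) (w k) (n%:R * s - k%:R).
Proof.
move=> n3 Hp C kn hs; rewrite /curve (gluepE _ kn hs) //.
move=> j jn.
have jlt : (j < n)%N by lia.
rewrite pline1; last exact: (dpos n3 Hp C jlt).
rewrite pline0; last exact: (dpos n3 Hp C jn).
by case: (C j jlt) => _ -> _; rewrite modn_small.
Qed.

Lemma fst_cont (f : R -> plane) : continuous f -> continuous (fun t => (f t).1).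
Proof. move=> cf x; apply: (cvg_comp _ _ (cf x)); exact: cvg_fst. Qed.

Lemma snd_cont (f : R -> plane) : continuous f -> continuous (fun t => (f t).2).
Proof. move=> cf x; apply: (cvg_comp _ _ (cf x)); exact: cvg_snd. Qed.

Lemma curve_cont n d w : continuous (curve n d w).
Proof.
apply: gluep_cont => j; [apply: fst_cont|apply: snd_cont]; exact: pline_cont.
Qed.

Lemma curve_piece n a d w s : (3 <= n)%N ->
  (forall i j, (i < j)%N -> (j < n)%N -> rc_prod (a i) (a j) = set0) ->
  cfg n a d w -> 0 <= s < 1 ->
  exists k, [/\ (k < n)%N, 0 <= n%:R * s - k%:R < 1,
     k%:R <= n%:R * s <= k.+1%:R &
     curve n d w s = pline (d k) (w k) (n%:R * s - k%:R)].
Proof.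
move=> n3 Hp C /andP[s0 s1].
have np : (0 < n)%N by lia.
have npos : 0 < n%:R :> R by rewrite ltr0n.
case: (@piece_open n (n%:R * s) np).
  apply/andP; split; first by apply: mulr_ge0 => //; apply: ltW.
  by rewrite -{2}(mulr1 n%:R) ltr_pM2l.
move=> k [kn /andP[h1 h2]].
have hk : k%:R <= n%:R * s <= k.+1%:R by rewrite h1 /= ltW.
exists k; split => //; last exact: (curve_eval n3 Hp C kn hk).
by rewrite -natr1 in h2; apply/andP; split; lra.
Qed.

Lemma curve_inj n a d w s s' : (3 <= n)%N ->
  (forall i, (i < n)%N -> regular_closed (a i)) ->
  (forall i j, (i < j)%N -> (j < n)%N -> rc_prod (a i) (a j) = set0) ->
  cfg n a d w -> good n d w -> 0 <= s < 1 -> 0 <= s' < 1 ->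
  curve n d w s = curve n d w s' -> s = s'.
Proof.
move=> n3 Hrc Hp C G hs hs' e.
have npos : 0 < n%:R :> R by rewrite ltr0n; lia.
case: (curve_piece n3 Hp C hs) => k [kn /andP[u0 u1] _ ek].
case: (curve_piece n3 Hp C hs') => k' [k'n /andP[u0' u1'] _ ek'].
rewrite ek ek' in e.
have dk := dpos n3 Hp C kn; have dk' := dpos n3 Hp C k'n.
have hu : 0 <= n%:R * s - k%:R <= 1 by rewrite u0 /= ltW.
have hu' : 0 <= n%:R * s' - k'%:R <= 1 by rewrite u0' /= ltW.
case: (eqVneq k k') => [ekk|nkk].
  rewrite -ekk in e hu'.
  have := pline_inj dk (proj1 (G k kn)) hu hu' e.
  by move=> h; apply: (mulfI (lt0r_neq0 npos)); lra.
exfalso.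
have [k0 k0d hk0] := pline_seg (w k) dk hu.
have [l0 l0d hl0] := pline_seg (w k') dk' hu'.
rewrite -e in hl0.
set y := pline (d k) (w k) (n%:R * s - k%:R) in e hk0 hl0.
have yU : UU n a k y by case: (C k kn) => _ _ c3; exact: (c3 k0 k0d).
have yU' : UU n a k' y by case: (C k' k'n) => _ _ c3; exact: (c3 l0 l0d).
case: (eqVneq k' ((k.+1) %% n)%N) => [h1|h1].
  rewrite h1 in l0d hl0.
  case: (proj2 (G k kn) k0 l0 y k0d l0d hk0 hl0) => _ _ ey.
  have : pline (d k) (w k) (n%:R * s - k%:R) = pline (d k) (w k) 1.
    by rewrite -/y ey pline1.
  move/(pline_inj dk (proj1 (G k kn)) hu) => h.
  have h01 : (0 <= (1:R) <= 1) by apply/andP; split; lra.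
  by move: (h h01); lra.
case: (eqVneq k ((k'.+1) %% n)%N) => [h2|h2].
  rewrite h2 in k0d hk0.
  case: (proj2 (G k' k'n) l0 k0 y l0d k0d hl0 hk0) => _ _ ey.
  have : pline (d k') (w k') (n%:R * s' - k'%:R) = pline (d k') (w k') 1.
    by rewrite -e ey pline1.
  move/(pline_inj dk' (proj1 (G k' k'n)) hu') => h.
  have h01 : (0 <= (1:R) <= 1) by apply/andP; split; lra.
  by move: (h h01); lra.
apply: (nonadj_disj n3 Hrc Hp kn k'n _ _ _ yU yU').
- by apply/eqP.
- by apply/eqP.
- by apply/eqP.
Qed.

Lemma scale_itv (n i : nat) (s : R) : (0 < n)%N ->
  (i%:R / n%:R <= s <= i.+1%:R / n%:R) = (i%:R <= n%:R * s <= i.+1%:R).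
Proof.
move=> np; have npos : 0 < n%:R :> R by rewrite ltr0n.
by rewrite ler_pdivrMr // ler_pdivlMr // ![s * _]mulrC.
Qed.

Lemma mul_div (n : nat) (x : R) : (0 < n)%N -> n%:R * (x / n%:R) = x.
Proof.
move=> np; have npos : n%:R != 0 :> R by rewrite pnatr_eq0; lia.
by rewrite mulrC divfK.
Qed.

Unset Implicit Arguments.

Theorem lemma5p2 (n : nat) (a : nat -> set plane) :
  (3 <= n)%N ->
  (forall i, (i < n)%N -> regular_closed (a i)) ->
  (forall i, (i < n)%N -> a i !=set0) ->
  (forall i, (i < n)%N -> connected (interior (a i `|` a ((i.+1) %% n)%N))) ->
  (forall i j, (i < j)%N -> (j < n)%N -> rc_prod (a i) (a j) = set0) ->
  exists (alpha : nat -> Rdefinitions.R -> plane) (p : nat -> plane),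
    [/\ forall i, (i < n)%N ->
          [/\ jordan_arc (alpha i), alpha i 0 = p i,
              alpha i 1 = p ((i.+1) %% n)%N &
              arc_img (alpha i) `<=` interior (a i `|` a ((i.+1) %% n)%N)],
        exists C : set plane, concat_jordan_curve n alpha C /\
          C `<=` interior (\bigcup_(i in `I_n) a i) &
        forall i, (i < n)%N -> interior (a i) (p i)].
Proof.
move=> n3 Hrc Hne Hcon Hp.
have np : (0 < n)%N by lia.
have hp : forall i, exists q : plane, (i < n)%N -> interior (a i) q.
  move=> i; case: (ltnP i n) => h.
    by case: (rc_int_nonempty (Hrc i h) (Hne i h)) => q hq; exists q.
  by exists (0, 0) => h'; exfalso; lia.
have [p Hp0] := choice hp.
have hw : forall i, exists dw : nat * (nat -> plane), (i < n)%N ->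
    [/\ dw.2 0%N = p i, dw.2 dw.1 = p ((i.+1) %% n)%N &
      forall j, (j < dw.1)%N -> seg (dw.2 j) (dw.2 j.+1) `<=` UU n a i].
  move=> i; case: (ltnP i n) => h; last by exists (0%N, fun _ => (0, 0)) => h'; exfalso; lia.
  have i'lt := succ_lt h.
  have pp : polypath (UU n a i) (p i) (p ((i.+1) %% n)%N).
    apply: polypath_conn.
    - exact: open_interior.
    - exact: Hcon.
    - by apply: (interiorS (@subsetUl _ _ _)); exact: Hp0.
    - by apply: (interiorS (@subsetUr _ _ _)); exact: Hp0.
  by case: pp => d0 [w0 [e0 e1 e2]]; exists (d0, w0) => _; split.
have [dw Hdw] := choice hw.
have C : cfg n a (fun i => (dw i).1) (fun i => (dw i).2).
  move=> i ilt; case: (Hdw i ilt) => e0 e1 e2; split => //.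
  - by rewrite e0; exact: Hp0.
  - by rewrite e1; case: (Hdw _ (succ_lt ilt)) => -> _ _.
have [d [w [C' G']]] := exists_good n3 Hrc Hp C.
have npos : 0 < n%:R :> R by rewrite ltr0n.
have eval := fun k s => @curve_eval n a d w k s n3 Hp C'.
exists (fun i => pline (d i) (w i)), (fun i => w i 0%N).
split.
- by move=> i ilt; case: (arc_ok n3 Hp C' G' ilt).
- exists (curve n d w @` `[0, 1]); split; last first.
    move=> y [s hs <-]; move: hs; rewrite /= in_itv /= => /andP[s0 s1].
    case: (@piece n (n%:R * s) np).
      apply/andP; split; first by apply: mulr_ge0 => //; apply: ltW.
      by rewrite -{2}(mulr1 n%:R) ler_wpM2l // ltW.
    move=> k [kn hk]; rewrite (eval k s kn hk).
    case: (arc_ok n3 Hp C' G' kn) => _ _ _ himg.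
    have hu : 0 <= n%:R * s - k%:R <= 1.
      by rewrite -natr1 in hk; case/andP: hk => h1 h2; apply/andP; split; lra.
    have : UU n a k (pline (d k) (w k) (n%:R * s - k%:R)).
      by apply: himg; exists (n%:R * s - k%:R) => //; rewrite /= in_itv.
    apply: interiorS => z [] hz.
      by exists k => //.
    by exists ((k.+1) %% n)%N => //; rewrite /= ltn_pmod.
  split.
    move=> i ilt.
    have dp := dpos n3 Hp C' ilt; have dp' := dpos n3 Hp C' (succ_lt ilt).
    by rewrite pline1 // pline0 //; case: (C' i ilt) => _ -> _.
  exists (curve n d w), (fun j => j%:R / n%:R); split.
  + split; first by apply: continuous_subspaceT; exact: curve_cont.
    split.
      have h0 : (0%N)%:R <= n%:R * (0:R) <= (0%N).+1%:R.
        by rewrite mulr0 lexx ler0n.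
      have e1 : (n.-1)%:R <= n%:R * (1:R) <= (n.-1).+1%:R.
        by rewrite mulr1 prednK // lexx ler_nat leq_pred.
      rewrite (eval 0%N 0 np h0) (eval n.-1 1 ltac:(lia) e1).
      have dn := dpos n3 Hp C' (ltac:(lia) : (n.-1 < n)%N).
      have d0 := dpos n3 Hp C' np.
      rewrite mulr0 subr0 pline0 //.
      have -> : n%:R * 1 - (n.-1)%:R = 1 :> R.
        by rewrite mulr1 -{1}(prednK np) -natr1; ring.
      rewrite pline1 //; case: (C' n.-1 ltac:(lia)) => _ -> _.
      by rewrite prednK // modnn.
    move=> s s'; rewrite !in_itv /= => hs hs'.
    exact: (curve_inj n3 Hrc Hp C' G' hs hs').
  + by rewrite mul0r.
  + by rewrite divff // pnatr_eq0; lia.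
  + by [].
  + move=> i ilt.
    have dp := dpos n3 Hp C' ilt.
    have ti : i%:R <= n%:R * ((i%:R : R) / n%:R) <= i.+1%:R.
      by rewrite mul_div //; apply/andP; split; rewrite ler_nat; lia.
    have ti' : i%:R <= n%:R * ((i.+1%:R : R) / n%:R) <= i.+1%:R.
      by rewrite mul_div //; apply/andP; split; rewrite ler_nat; lia.
    split.
    * by rewrite ler_pM2r ?invr_gt0 // ler_nat.
    * apply/seteqP; split => y [s hs <-].
        move: hs; rewrite /= in_itv /= -/(is_true _) => hs.
        rewrite scale_itv // in hs.
        rewrite (eval i s ilt hs); exists (n%:R * s - i%:R) => //.
        rewrite -natr1 in hs; case/andP: hs => h1 h2.
        by rewrite /= in_itv /=; apply/andP; split; lra.
      move: hs; rewrite /= in_itv /= => /andP[u0 u1].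
      exists ((i%:R + s) / n%:R).
        rewrite /= in_itv /= scale_itv // mul_div //.
        by rewrite -natr1; apply/andP; split; lra.
      have hs : i%:R <= n%:R * ((i%:R + s) / n%:R) <= i.+1%:R.
        by rewrite mul_div // -natr1; apply/andP; split; lra.
      rewrite (eval i _ ilt hs) mul_div //.
      by have -> : i%:R + s - i%:R = s by ring.
    * by rewrite (eval i _ ilt ti) mul_div // subrr.
    * rewrite (eval i _ ilt ti') mul_div // -natr1.
      by have -> : i%:R + 1 - i%:R = 1 :> R by ring.
- by move=> i ilt; case: (C' i ilt).
Qed.
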